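(* Let $\mathcal{G}=(\mathcal{V},\mathcal{E},\mathbf{X})\sim \mathrm{CSBM}(n,p,q,\mathbb{P}_1,\mathbb{P}_{-1})$ with $p,q\in(0,1)$, where $\mathbb{P}_{1},\mathbb{P}_{-1}$ have densities (also denoted $\mathbb{P}_{1},\mathbb{P}_{-1}$). Fix a node $v$ with neighbor set $\mathcal{N}_v$. Consider the MAP estimator of $Y_v$ given $X_v$, $\{X_u\}_{u\in\mathcal{N}_v}$ and $\mathcal{N}_v$, $$f^*(X_v,\{X_u\}_{u\in\mathcal{N}_v})=\arg\max_{Y_v\in\{-1,1\}}\max_{Y_u\in\{-1,1\},\,\forall u\in\mathcal{N}_v}\pi_{Y_v,\{Y_u\}_{u\in\mathcal{N}_v}}\,\mathbb{P}\big(X_v,\{X_u\}_{u\in\mathcal{N}_v},\mathcal{N}_v\,\big|\,Y_v,\{Y_u\}_{u\in\mathcal{N}_v}\big),$$ where $\pi$ denotes the prior of the labels. Then the optimal (MAP) classifier is $f^*=\mathrm{sgn}(\mathcal{P}_v)$, where $$\mathcal{P}_v=\psi(X_v;\mathbb{P}_1,\mathbb{P}_{-1})+\sum_{u\in\mathcal{N}_v}\phi\big(\psi(X_u;\mathbb{P}_1,\mathbb{P}_{-1});\log(p/q)\big),$$ with $\psi(a;\mathbb{P}_1,\mathbb{P}_{-1})=\log\frac{\mathbb{P}_1(a)}{\mathbb{P}_{-1}(a)}$ and $\phi(a;b)=\mathrm{ReLU}(a+b)-\mathrm{ReLU}(a-b)-b$.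
   Context: $\mathrm{CSBM}(n,p,q,\mathbb{P}_1,\mathbb{P}_{-1})$ (contextual stochastic block model): there are $n$ nodes $\mathcal{V}=[n]$; each node $v$ independently gets a label $Y_v\in\{-1,1\}$ uniformly at random (Rademacher); given $Y_v$, the attribute $X_v$ is drawn from $\mathbb{P}_{Y_v}$; for two nodes $u,v$, an edge is present with probability $p$ if $Y_u=Y_v$ and with probability $q$ if $Y_u\neq Y_v$; all attributes and edges are mutually independent given the labels $\mathbf{Y}$. $\mathrm{ReLU}(x)=\max\{x,0\}$. *)

(* Defs.v *)
From HB Require Import structures.
From mathcomp Require Import all_boot all_order all_algebra.
From mathcomp Require Import all_classical all_reals.
From mathcomp Require Import exp.
Set Implicit Arguments. Unset Strict Implicit. Unset Printing Implicit Defensive.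
Import Order.TTheory GRing.Theory Num.Theory.
Local Open Scope ring_scope.

Section CSBM.
Variables (R : realType) (T : Type) (n : nat).

(* Labels are encoded as booleans: true <-> +1, false <-> -1. *)
Definition lab (b : bool) : R := if b then 1 else -1.

Definition dens (P1 Pm1 : T -> R) (b : bool) (a : T) : R :=
  if b then P1 a else Pm1 a.

Definition edgep (p q : R) (a b : bool) : R := if a == b then p else q.

(* Joint density, given the FULL label vector y, of the observations
   (X_v, {X_u}_{u in S}) evaluated at x, together with the event N_v = S:
   attributes independent with densities P_{Y_w}, and each u <> v is a
   neighbour of v independently with probability p (same label) or q. *)
Definition cond_lik (P1 Pm1 : T -> R) (p q : R) (v : 'I_n) (S : {set 'I_n})
    (x : 'I_n -> T) (y : {ffun 'I_n -> bool}) : R :=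
  (\prod_(w in v |: S) dens P1 Pm1 (y w) (x w)) *
  \prod_(u : 'I_n | u != v)
     (if u \in S then edgep p q (y u) (y v) else 1 - edgep p q (y u) (y v)).

(* pi_{Y_v, Y_S} * P(X_v, X_S, N_v = S | Y_v, Y_S): the joint of the labels
   of v and of its neighbours with the observations, obtained by
   marginalising the (uniform, independent) labels of all other nodes. *)
Definition joint_post (P1 Pm1 : T -> R) (p q : R) (v : 'I_n) (S : {set 'I_n})
    (x : 'I_n -> T) (yv : bool) (yS : {ffun 'I_n -> bool}) : R :=
  (2%:R ^- n) *
  \sum_(y : {ffun 'I_n -> bool} | (y v == yv) && [forall u in S, y u == yS u])
     cond_lik P1 Pm1 p q v S x y.

(* MAP objective for Y_v: maximum over the labels of the neighbours
   (only the values of yS on S matter; all values are >= 0). *)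
Definition map_obj (P1 Pm1 : T -> R) (p q : R) (v : 'I_n) (S : {set 'I_n})
    (x : 'I_n -> T) (yv : bool) : R :=
  \big[Num.max/0]_(yS : {ffun 'I_n -> bool}) joint_post P1 Pm1 p q v S x yv yS.

(* The MAP classifier f*, as a sign: +1 if argmax = {1}, -1 if argmax = {-1},
   0 in case of a tie. *)
Definition map_classifier (P1 Pm1 : T -> R) (p q : R) (v : 'I_n)
    (S : {set 'I_n}) (x : 'I_n -> T) : R :=
  Num.sg (map_obj P1 Pm1 p q v S x true - map_obj P1 Pm1 p q v S x false).

Definition ReLU (a : R) : R := Num.max a 0.

Definition psi (P1 Pm1 : T -> R) (a : T) : R := ln (P1 a / Pm1 a).

Definition phi (a b : R) : R := ReLU (a + b) - ReLU (a - b) - b.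

Definition calP (P1 Pm1 : T -> R) (p q : R) (v : 'I_n) (S : {set 'I_n})
    (x : 'I_n -> T) : R :=
  psi P1 Pm1 (x v) + \sum_(u in S) phi (psi P1 Pm1 (x u)) (ln (p / q)).

End CSBM.

(* Main.v *)
Require Import Defs.
From mathcomp Require Import all_boot all_order all_algebra.
From mathcomp Require Import all_classical all_reals.
From mathcomp Require Import exp lra.
Import Order.TTheory GRing.Theory Num.Theory.
Local Open Scope ring_scope.

Section Aux.
Variable R : realType.

Lemma bigmax_ge_seq (I : eqType) (r : seq I) (P : pred I) (F : I -> R) i :
  i \in r -> P i -> F i <= \big[Num.max/0]_(j <- r | P j) F j.
Proof.
move=> + Pi; elim: r => // a r IH; rewrite inE big_cons => /orP[/eqP<-|/IH h].
  by rewrite Pi le_max lexx.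
by case: ifP => // _; rewrite le_max h orbT.
Qed.

Lemma bigmax_prod (n : nat) (c : R) (G : 'I_n -> bool -> R) :
  0 <= c -> (forall u b, 0 <= G u b) ->
  \big[Num.max/0]_(f : {ffun 'I_n -> bool}) (c * \prod_u G u (f u)) =
  c * \prod_u Num.max (G u true) (G u false).
Proof.
move=> c0 G0; apply/eqP; rewrite eq_le; apply/andP; split.
  apply: (big_ind (fun m => m <= c * \prod_u Num.max (G u true) (G u false))).
  - apply: mulr_ge0 => //; apply: prodr_ge0 => u _; by rewrite le_max G0.
  - by move=> a b ha hb; rewrite ge_max ha hb.
  - move=> f _; apply: ler_wpM2l => //; apply: ler_prod => u _.
    by rewrite G0 /=; case: (f u); rewrite le_max lexx ?orbT.
pose f0 : {ffun 'I_n -> bool} := [ffun u => G u false <= G u true].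
have -> : \prod_u Num.max (G u true) (G u false) = \prod_u G u (f0 u).
  apply: eq_bigr => u _; rewrite ffunE.
  by case: (lerP (G u false) (G u true)).
have := @bigmax_ge_seq _ (index_enum {ffun 'I_n -> bool}) xpredT
  (fun f : {ffun 'I_n -> bool} => c * \prod_u G u (f u)) f0 (mem_index_enum f0) erefl.
by apply.
Qed.

Lemma ln_prod (I : Type) (r : seq I) (P : pred I) (F : I -> R) :
  (forall i, 0 < F i) -> ln (\prod_(i <- r | P i) F i) = \sum_(i <- r | P i) ln (F i).
Proof.
move=> F0.
suff : 0 < \prod_(i <- r | P i) F i /\ ln (\prod_(i <- r | P i) F i) = \sum_(i <- r | P i) ln (F i) by case.
apply: (big_rec2 (fun a s => 0 < a /\ ln a = s)); first by rewrite ln1.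
move=> i a s _ [a0 <-]; split; first by rewrite mulr_gt0.
by rewrite lnM // posrE.
Qed.

Lemma ln_max (a b : R) : 0 < a -> 0 < b -> ln (Num.max a b) = Num.max (ln a) (ln b).
Proof.
move=> a0 b0; case: (lerP a b) => h.
  by rewrite max_r // ler_ln // posrE.
by rewrite max_l // ler_ln ?posrE // ltW.
Qed.

Lemma maxdiff (l1 lm lp lq : R) :
  Num.max (l1 + lp) (lm + lq) - Num.max (l1 + lq) (lm + lp) =
  Num.max ((l1 - lm) + (lp - lq)) 0 - Num.max ((l1 - lm) - (lp - lq)) 0 - (lp - lq).
Proof.
case: (lerP (l1 + lp) (lm + lq)) => h1; case: (lerP (l1 + lq) (lm + lp)) => h2;
case: (lerP ((l1 - lm) + (lp - lq)) 0) => h3; case: (lerP ((l1 - lm) - (lp - lq)) 0) => h4;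
lra.
Qed.

End Aux.

Theorem proposition1 (R : realType) (T : Type) (n : nat)
    (P1 Pm1 : T -> R) (p q : R) (v : 'I_n) (S : {set 'I_n}) (x : 'I_n -> T) :
  0 < p < 1 -> 0 < q < 1 ->
  v \notin S ->
  (forall w, w \in v |: S -> 0 < P1 (x w)) ->
  (forall w, w \in v |: S -> 0 < Pm1 (x w)) ->
  map_classifier P1 Pm1 p q v S x = Num.sg (calP P1 Pm1 p q v S x).
Proof.
move=> /andP[p0 p1] /andP[q0 q1] vS HP1 HPm1.
pose G (yv : bool) (u : 'I_n) (b : bool) : R :=
  if u == v then dens P1 Pm1 yv (x v)
  else if u \in S then dens P1 Pm1 b (x u) * edgep p q b yv else (1 - p) + (1 - q).
have Hjp : forall yv yS, joint_post P1 Pm1 p q v S x yv yS = 2%:R ^- n * \prod_u G yv u (yS u).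
  move=> yv yS; rewrite /joint_post; congr (_ * _).
  pose H (u : 'I_n) (b : bool) : R :=
    if u == v then dens P1 Pm1 yv (x v)
    else if u \in S then dens P1 Pm1 b (x u) * edgep p q b yv else 1 - edgep p q b yv.
  pose Q (u : 'I_n) (b : bool) : bool :=
    if u == v then b == yv else if u \in S then b == yS u else true.
  rewrite (eq_bigl (mem (family Q))); last first.
    move=> y; rewrite inE; apply/andP/familyP.
      move=> [/eqP yv' /forall_inP h] u; rewrite unfold_in /Q.
      case: eqP => [->|_]; first by rewrite yv'.
      by case: ifP => // uS; apply: h.
    move=> h; split.
      by have := h v; rewrite unfold_in /Q eqxx.
    apply/forall_inP => u uS; have := h u; rewrite unfold_in /Q uS.
    by case: eqP => // uv; move: vS; rewrite -uv uS.
  rewrite (eq_bigr (fun y : {ffun 'I_n -> bool} => \prod_u H u (y u))); last first.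
    move=> y /familyP hy.
    have yvv : y v = yv by have := hy v; rewrite unfold_in /Q eqxx => /eqP.
    have Hv : H v (y v) = dens P1 Pm1 yv (x v) by rewrite /H eqxx.
    rewrite /cond_lik (big_setU1 _ vS) /= [RHS](bigD1 v) //= Hv yvv -mulrA; congr (_ * _).

    transitivity (\prod_(u | u != v) (if u \in S then dens P1 Pm1 (y u) (x u) else 1) *
                  \prod_(u | u != v) (if u \in S then edgep p q (y u) yv else 1 - edgep p q (y u) yv)).
      congr (_ * _).
      rewrite -big_mkcondr /=; apply: eq_bigl => u.
      by case: eqP => [->|]; rewrite ?(negbTE vS) //.
    rewrite -big_split /=; apply: eq_bigr => u /negbTE uv.
    by rewrite /H uv; case: ifP; rewrite ?mul1r.
  rewrite -bigA_distr_big_dep; apply: eq_bigr => u _.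
  rewrite /Q /H /G; case: eqP => _.
    by rewrite big_pred1_eq.
  case: ifP => _; first by rewrite big_pred1_eq.
  rewrite big_bool /=; clear H Q; case: yv; rewrite /edgep /= //; exact: addrC.
have G0 : forall yv u b, 0 < G yv u b.
  move=> yv u b; rewrite /G; case: eqP => [_|uv].
    by case: yv; rewrite /dens; [apply: HP1|apply: HPm1]; rewrite setU11.
  case: ifP => uS; last by lra.
  have uS' : u \in v |: S by rewrite in_setU1 uS orbT.
  apply: mulr_gt0; first by case: b; rewrite /dens; [apply: HP1|apply: HPm1].
  by rewrite /edgep; case: ifP.
have Hmo : forall yv, map_obj P1 Pm1 p q v S x yv =
   2%:R ^- n * \prod_u Num.max (G yv u true) (G yv u false).
  move=> yv; rewrite /map_obj (eq_bigr _ (fun yS _ => Hjp yv yS)).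
  apply: bigmax_prod => //; first by rewrite invr_ge0 exprn_ge0 // ler0n.
  by move=> u b; apply: ltW.
rewrite /map_classifier !Hmo -mulrBr sgrM gtr0_sg ?mul1r; last first.
  by rewrite invr_gt0 exprn_gt0 // ltr0n.
set A := \prod_u _; set B := \prod_u _.
have MG : forall yv u, 0 < Num.max (G yv u true) (G yv u false).
  by move=> yv u; rewrite lt_max G0.
have A0 : 0 < A by apply: prodr_gt0 => u _.
have B0 : 0 < B by apply: prodr_gt0 => u _.
have -> : calP P1 Pm1 p q v S x = ln A - ln B.
  rewrite /A /B !ln_prod // -sumrB (bigD1 v) //= /calP; congr (_ + _).
    rewrite /G eqxx !maxxx /psi /dens ln_div // posrE.
      by apply: HP1; rewrite setU11.
    by apply: HPm1; rewrite setU11.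
  rewrite big_mkcond [RHS]big_mkcond /=; apply: eq_bigr => u _.
  rewrite /G; case: eqP => [->|uv] /=; first by rewrite (negbTE vS).
  case: ifP => uS; last by rewrite !maxxx subrr.
  have uS' : u \in v |: S by rewrite in_setU1 uS orbT.
  have a0 := HP1 _ uS'; have b0 := HPm1 _ uS'.
  have qi : 0 < q^-1 by rewrite invr_gt0.
  rewrite /dens /edgep /= !ln_max ?mulr_gt0 // !lnM ?posrE //.
  have := @maxdiff R (ln (P1 (x u))) (ln (Pm1 (x u))) (ln p) (ln q). move=> ->. rewrite /phi /ReLU.
  by rewrite /psi ln_div ?posrE // lnV ?posrE // invr_gt0.
case: (ltrgtP A B) => h.
- rewrite !ltr0_sg ?subr_lt0 // ltr_ln ?posrE //.
- rewrite !gtr0_sg ?subr_gt0 // ltr_ln ?posrE //.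
- by rewrite h !subrr.
Qed.
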